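(* Let $S\in\mathbb{R}^{n_\theta\times n_\theta}$, $F\in\mathbb{R}^{n_x\times n_\theta}$, and $\theta_0\in\mathbb{R}^{n_\theta}$ satisfy the standing assumptions in the context, with excited modes $v_1,\dots,v_{k_1+k_2}$ and eigenvalues $\lambda_1,\dots,\lambda_{k_1+k_2}$. Let $y_n$, $z_\ell$, $Z_\ell$, $Y_n$ and $w_j$ be as defined in the context. (i) For every $\ell\ge 0$, the vectors $z_0,z_1,\dots,z_\ell$ are pairwise orthogonal. Some of them may be the zero vector. (ii) Assume further that $\lambda_1,\dots,\lambda_{k_1+k_2}$ are pairwise distinct, and that $\lambda_i\neq 1$ for every $i=1,\dots,k_1$. Let $n\ge 1$ and let $m$ be an integer with $1\le m\le \min(n,k_1)$. Then $w_1,\dots,w_m$ are linearly independent. Here $w_1,\dots,w_m$ are the first $m$ columns of the matrix $[\,y_1,\ Y_n\,]$.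
   Context: Standing assumptions: $S\in\mathbb{R}^{n_\theta\times n_\theta}$ and $F\in\mathbb{R}^{n_x\times n_\theta}$. $F^\dagger$ denotes the Moore–Penrose pseudoinverse, so that $F^\dagger F$ is the orthogonal projection onto $\mathcal{R}(F^\top)$. The initial vector $\theta_0\in\mathbb{R}^{n_\theta}$ can be written as $\theta_0=\sum_{i=1}^{k_1+k_2}\rho_i v_i$ with $\rho_i\in\mathbb{C}\setminus\{0\}$, where each $v_i\in\mathbb{C}^{n_\theta}$ is an eigenvector of $S$, i.e. $Sv_i=\lambda_i v_i$. The first $k_1$ of them lie in $\mathcal{R}(F^\top)$ (complexified), i.e. $F^\dagger F v_i=v_i$ for $i\le k_1$. The remaining $k_2$ lie in $\mathcal{R}(F^\top)^\perp$, i.e. $F^\dagger F v_i=0$ for $k_1<i\le k_1+k_2$. These $v_i$ are called the excited modes of $S$. Data: for $n\ge1$ let $y_n:=F^\dagger F\,S^{n-1}(S-I)\theta_0\in\mathbb{R}^{n_\theta}$. In the paper, $y_n=F^\dagger(\Delta x_n-\Delta f_n)$ is computed from state measurements, and the trapezoidal integration error is assumed to be zero, which gives this identity. Recursions: - Set $z_0:=y_1$ and $Z_0:=[z_0]$. - For $\ell\ge1$, set $z_\ell:=(I-Z_{\ell-1}Z_{\ell-1}^\dagger)\,y_{\ell+1}$, which is the orthogonal projection of $y_{\ell+1}$ onto $\mathcal{R}(Z_{\ell-1})^\perp$. Then set $Z_\ell:=[\,Z_{\ell-1},\ z_\ell\,]=[z_0,\dots,z_\ell]$. - Set $Y_2:=[\,y_2\,]$.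 For $n\ge3$, set $Y_n:=[\,Y_{n-1},\ y_n-Y_{n-1}Z_{n-3}^\dagger y_{n-1}\,]$. Finally define $w_1:=y_1$, $w_2:=y_2$, and for $j\ge3$ let $w_j:=y_j-Y_{j-1}Z_{j-3}^\dagger y_{j-1}$, the last column of $Y_j$. Thus $[\,y_1,\ Y_n\,]=[w_1,\dots,w_n]$. *)

(* Defs.v *)
From HB Require Import structures.
From mathcomp Require Import all_boot all_order all_algebra.
From mathcomp Require Import complex.
Set Implicit Arguments. Unset Strict Implicit. Unset Printing Implicit Defensive.
Import Order.TTheory GRing.Theory Num.Theory.
Local Open Scope ring_scope.

(* Moore--Penrose pseudoinverse, via the full-rank factorization
   A = col_base A *m row_base A (lemma mulmx_base):
   A^+ = B^T (B B^T)^-1 (C^T C)^-1 C^T  with C = col_base A, B = row_base A. *)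
Definition pinv (R : fieldType) (m n : nat) (A : 'M[R]_(m, n)) : 'M[R]_(n, m) :=
  let C := col_base A in let B := row_base A in
  B^T *m invmx (B *m B^T) *m invmx (C^T *m C) *m C^T.

Definition colsmx (R : pzRingType) (n k : nat) (s : seq 'cV[R]_n) : 'M[R]_(n, k) :=
  \matrix_(i < n, j < k) (nth 0 s j) i 0.

Definition ydat (R : fieldType) (nx nt : nat) (S : 'M[R]_nt) (F : 'M[R]_(nx, nt))
  (theta0 : 'cV[R]_nt) (n : nat) : 'cV[R]_nt :=
  pinv F *m F *m (S ^+ n.-1 *m (S - 1%:M) *m theta0).

Section Recursions.
Variables (R : fieldType) (nt : nat) (y : nat -> 'cV[R]_nt).

(* zs l = [:: z_0; ...; z_l] *)
Fixpoint zs (l : nat) : seq 'cV[R]_nt :=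
  match l with
  | 0 => [:: y 1%N]
  | l'.+1 => let s := zs l' in
      rcons s ((1%:M - colsmx l'.+1 s *m pinv (colsmx l'.+1 s)) *m y l'.+2)
  end.

Definition zvec (l : nat) : 'cV[R]_nt := nth 0 (zs l) l.
Definition Zmat (l : nat) : 'M[R]_(nt, l.+1) := colsmx l.+1 (zs l).

(* wseq n = [:: w_1; ...; w_n], the columns of [y_1, Y_n] *)
Fixpoint wseq (n : nat) : seq 'cV[R]_nt :=
  match n with
  | 0 => [::]
  | 1 => [:: y 1%N]
  | 2 => [:: y 1%N; y 2%N]
  | (k.+2 as p).+1 => let s := wseq p in
      (* Y_{k+2} = colsmx k.+1 (behead s), Z_k has k+1 columns *)
      rcons s (y p.+1 - colsmx k.+1 (behead s) *m pinv (Zmat k) *m y k.+2)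
  end.

Definition Ymat (n : nat) : 'M[R]_(nt, n.-1) := colsmx n.-1 (behead (wseq n)).
Definition wvec (j : nat) : 'cV[R]_nt := nth 0 (wseq j) j.-1.

End Recursions.

(* Main.v *)
Require Import Defs.
From HB Require Import structures.
From mathcomp Require Import all_boot all_order all_algebra ring.
From mathcomp Require Import complex.
Import Order.TTheory GRing.Theory Num.Theory.
Local Open Scope ring_scope.
Set Implicit Arguments. Unset Strict Implicit. Unset Printing Implicit Defensive.

Section Real.
Variable R : realFieldType.

Lemma sumsq0 n (w : 'rV[R]_n) : w *m w^T = 0 -> w = 0.
Proof.
move=> /matrixP /(_ 0 0); rewrite !mxE => H.
have H2 := psumr_eq0P (P := predT) (F := fun j => w 0 j * w^T j 0).
have {}H2 := H2 (fun j _ => ltac:(rewrite mxE; rewrite -expr2; apply: sqr_ge0)) H.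
apply/matrixP => i j; rewrite mxE (ord1 i).
by have := H2 j isT; rewrite mxE => /eqP; rewrite mulf_eq0 orbb => /eqP.
Qed.

Lemma gram_unit r n (M : 'M[R]_(r, n)) : row_free M -> M *m M^T \in unitmx.
Proof.
move=> fM; rewrite unitmxE unitfE; apply/det0P => -[u u0 Hu].
have : (u *m M) *m (u *m M)^T = 0.
  by rewrite trmx_mul mulmxA -(mulmxA u) Hu mul0mx.
move/sumsq0/eqP; rewrite mulmx_free_eq0 // => /eqP; exact/eqP.
Qed.

Lemma pinv_proj m n (A : 'M[R]_(m, n)) :
  A *m pinv A = col_base A *m invmx ((col_base A)^T *m col_base A) *m (col_base A)^T.
Proof.
rewrite /pinv -{1}(mulmx_base A).
have := gram_unit (row_base_free A).
move: (row_base A) (col_base A) => B C uB.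
rewrite !mulmxA -[C *m B *m B^T]mulmxA -[C *m (B *m B^T) *m _]mulmxA.
by rewrite mulmxV ?mulmx1.
Qed.

Lemma CtC_unit m n (A : 'M[R]_(m, n)) : (col_base A)^T *m col_base A \in unitmx.
Proof.
have := @gram_unit _ _ (col_base A)^T; rewrite trmxK; apply.
by rewrite /row_free mxrank_tr; have := col_base_full A.
Qed.

Lemma pinv_sym m n (A : 'M[R]_(m, n)) : (A *m pinv A)^T = A *m pinv A.
Proof.
rewrite pinv_proj; move: (col_base A) => C.
by rewrite !trmx_mul trmxK trmx_inv trmx_mul trmxK mulmxA.
Qed.

Lemma pinv_id m n (A : 'M[R]_(m, n)) : A *m pinv A *m A = A.
Proof.
rewrite pinv_proj -[RHS](mulmx_base A) -[X in _ *m X = _](mulmx_base A).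
have := CtC_unit A; move: (row_base A) (col_base A) => B C uC.
by rewrite -!mulmxA [C^T *m (C *m B)]mulmxA (mulmxA (invmx _)) mulVmx // mul1mx.
Qed.

Lemma zs_size nt (y : nat -> 'cV[R]_nt) l : size (zs y l) = l.+1.
Proof. by elim: l => //= l IH; rewrite size_rcons IH. Qed.

Lemma zs_nth nt (y : nat -> 'cV[R]_nt) l i : (i <= l)%N ->
  nth 0 (zs y l) i = zvec y i.
Proof.
elim: l => [|l IH]; first by rewrite leqn0 => /eqP->.
rewrite leq_eqVlt => /orP[/eqP->//|]; rewrite ltnS => il.
by rewrite /= nth_rcons zs_size ltnS il IH.
Qed.

Lemma zorth_lt nt (y : nat -> 'cV[R]_nt) i j : (i < j)%N ->
  (zvec y i)^T *m zvec y j = 0.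
Proof.
case: j => // j; rewrite ltnS => ij.
set Z := colsmx j.+1 (zs y j).
have ->: zvec y j.+1 = (1%:M - Z *m pinv Z) *m y j.+2.
  by rewrite /zvec /= nth_rcons zs_size ltnn eqxx.
have zi : zvec y i = Z *m delta_mx (Ordinal (ij : (i < j.+1)%N)) 0.
  rewrite -colE; apply/matrixP => a b; rewrite !mxE (ord1 b) /=.
  by rewrite zs_nth.
rewrite mulmxA -[_^T *m (1%:M - _)]trmxK trmx_mul trmxK zi mulmxA.
suff -> : (1%:M - Z *m pinv Z)^T *m Z = 0 by rewrite mul0mx trmx0 mul0mx.
rewrite linearB /= trmx1 pinv_sym mulmxBl mul1mx pinv_id subrr //.
Qed.
End Real.
Section W.
Variables (R : fieldType) (nt : nat) (y : nat -> 'cV[R]_nt).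

Lemma colsmx_span k (s : seq 'cV[R]_nt) (c : 'cV[R]_k) :
  colsmx k s *m c \in <<s>>%VS.
Proof.
have -> : colsmx k s *m c = \sum_(j < k) c j 0 *: nth 0 s j.
  apply/matrixP => a b; rewrite !mxE summxE; apply: eq_bigr => j _.
  by rewrite !mxE (ord1 b) mulrC.
apply: memv_suml => j _; apply: memvZ.
case: (ltnP j (size s)) => js; first by apply: memv_span; apply: mem_nth.
by rewrite nth_default // mem0v.
Qed.

Lemma wseqS j : exists2 u, u \in <<wseq y j>>%VS &
  wseq y j.+1 = rcons (wseq y j) (y j.+1 - u).
Proof.
case: j => [|[|k]]; try by exists 0; rewrite ?mem0v ?subr0.
exists (colsmx k.+1 (behead (wseq y k.+2)) *m pinv (Zmat y k) *m y k.+2) => //.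
rewrite -mulmxA.
have H : (<<behead (wseq y k.+2)>> <= <<wseq y k.+2>>)%VS.
  by apply/span_subvP => x /mem_behead xs; apply: memv_span.
exact: (subvP H _ (colsmx_span _ _)).
Qed.

Lemma wseq_size n : size (wseq y n) = n.
Proof. by elim: n => // n IH; have [u _ ->] := wseqS n; rewrite size_rcons IH. Qed.

Lemma wseq_take m n : (m <= n)%N -> take m (wseq y n) = wseq y m.
Proof.
elim: n => [|n IH]; first by rewrite leqn0 => /eqP->.
rewrite leq_eqVlt => /orP[/eqP->|]; first by rewrite take_oversize // wseq_size.
rewrite ltnS => mn; have [u _ ->] := wseqS n.
by rewrite -cats1 takel_cat ?wseq_size // IH.
Qed.

Definition ys j := [seq y i.+1 | i <- iota 0 j].

Lemma wseq_span j : (<<wseq y j>> <= <<ys j>>)%VS.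
Proof.
elim: j => [|j IH]; first by rewrite /= span_nil sub0v.
have [u uin ->] := wseqS j.
have iS : iota 0 j.+1 = iota 0 j ++ [:: j] by rewrite -addn1 iotaD.
have sub : (<<ys j>> <= <<ys j.+1>>)%VS.
  apply/span_subvP => x xin; apply: memv_span.
  by rewrite /ys iS map_cat mem_cat xin.
have yin : y j.+1 \in <<ys j.+1>>%VS.
  by apply: memv_span; rewrite /ys iS map_cat mem_cat /= inE eqxx orbT.
apply/span_subvP => x; rewrite mem_rcons inE => /orP[/eqP->|xin].
  by apply: memvB => //; apply: (subvP sub); apply: (subvP IH).
by apply: (subvP sub); apply: (subvP IH); apply: memv_span.
Qed.

Lemma wseq_free k : (forall j, (j < k)%N -> y j.+1 \notin <<ys j>>%VS) ->
  forall m, (m <= k)%N -> free (wseq y m).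
Proof.
move=> key; elim=> [|m IH] mk; first exact: nil_free.
have [u uin ->] := wseqS m.
rewrite (perm_free (_ : perm_eq _ (y m.+1 - u :: wseq y m))); last first.
  by rewrite perm_rcons.
rewrite free_cons IH ?(ltnW mk) // andbT.
apply/negP => xin; move: (key m mk); apply/negP/negPn.
apply: (subvP (wseq_span m)).
by rewrite -(subrK u (y m.+1)); apply: memvD.
Qed.
End W.
Section Indep.
Variables (K : fieldType) (nt N : nat) (SC : 'M[K]_nt) (v : 'I_N -> 'cV[K]_nt)
  (lambda : 'I_N -> K).
Hypothesis Hv0 : forall i, v i != 0.
Hypothesis Heig : forall i, SC *m v i = lambda i *: v i.
Hypothesis Hdist : forall i j, i != j -> lambda i != lambda j.

Lemma indep_seq (s : seq 'I_N) (e : 'I_N -> K) : uniq s ->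
  \sum_(i <- s) e i *: v i = 0 -> forall i, i \in s -> e i = 0.
Proof.
elim: s e => [|i0 s IH] e //= /andP[i0s us]; rewrite big_cons => Hs.
have Hs' : \sum_(i <- s) (e i * (lambda i - lambda i0)) *: v i = 0.
  have := congr1 (mulmx (SC - (lambda i0)%:M)) Hs.
  rewrite mulmx0 mulmxDr -scalemxAr mulmxBl Heig mul_scalar_mx subrr scaler0 add0r.
  rewrite mulmx_sumr => H0; rewrite -[RHS]H0; apply: eq_bigr => i _.
  by rewrite -scalemxAr mulmxBl Heig mul_scalar_mx -scalerBl scalerA mulrC.
have es : forall i, i \in s -> e i = 0.
  move=> i ins; have := IH _ us Hs' i ins => /eqP; rewrite mulf_eq0 subr_eq0.
  have /Hdist/negbTE -> : i != i0 by apply: contraNneq i0s => <-.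
  by rewrite orbF => /eqP.
have : e i0 *: v i0 = 0.
  by rewrite -Hs big_seq big1 ?addr0 // => i /es ->; rewrite scale0r.
move/eqP; rewrite scaler_eq0 (negbTE (Hv0 i0)) orbF => /eqP e0.
by move=> i; rewrite inE => /orP[/eqP->|/es].
Qed.

Lemma indep (e : 'I_N -> K) : \sum_i e i *: v i = 0 -> forall i, e i = 0.
Proof.
move=> H i; apply: (indep_seq (s := index_enum 'I_N)) => //.
  exact: index_enum_uniq.
exact: mem_index_enum.
Qed.
End Indep.
Section Main.
Variables (R : rcfType) (nx nt : nat) (S : 'M[R]_nt) (F : 'M[R]_(nx, nt))
  (theta0 : 'cV[R]_nt) (k1 k2 : nat)
  (v : 'I_(k1 + k2) -> 'cV[R[i]]_nt) (lambda : 'I_(k1 + k2) -> R[i])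
  (rho : 'I_(k1 + k2) -> R[i]).
Hypotheses (Hrho : forall i, rho i != 0)
  (Hv0 : forall i, v i != 0)
  (Heig : forall i, map_mx (real_complex R) S *m v i = lambda i *: v i)
  (Htheta : map_mx (real_complex R) theta0 = \sum_(i < k1 + k2) rho i *: v i)
  (Hin : forall i : 'I_(k1 + k2), (i < k1)%N ->
     map_mx (real_complex R) (pinv F *m F) *m v i = v i)
  (Hout : forall i : 'I_(k1 + k2), (k1 <= i)%N ->
     map_mx (real_complex R) (pinv F *m F) *m v i = 0).
Local Notation phi := (real_complex R).
Local Notation y := (ydat S F theta0).
Local Notation PC := (map_mx phi (pinv F *m F)).

Lemma powv n i : map_mx phi (S ^+ n) *m v i = lambda i ^+ n *: v i.
Proof.
elim: n => [|n IH]; first by rewrite expr0 map_mx1 mul1mx scale1r.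
by rewrite exprS -mulmxE map_mxM -mulmxA IH -scalemxAr Heig scalerA mulrC -exprS.
Qed.

Lemma Sm1 i : map_mx phi (S - 1%:M) *m v i = (lambda i - 1) *: v i.
Proof. by rewrite map_mxB map_mx1 mulmxBl Heig mul1mx scalerBl scale1r. Qed.

Lemma yC n : map_mx phi (y n.+1) =
  \sum_i (rho i * (lambda i ^+ n * (lambda i - 1))) *: (PC *m v i).
Proof.
rewrite /ydat /=; move: (pinv F *m F) => P.
rewrite map_mxM [map_mx _ (_ *m theta0)]map_mxM Htheta !mulmx_sumr.
apply: eq_bigr => i _.
rewrite map_mxM -!scalemxAr -mulmxA Sm1 -scalemxAr powv.
by rewrite scalerA -scalemxAr scalerA [_ * lambda i ^+ n]mulrC.
Qed.
Hypothesis Hd : forall i j, i != j -> lambda i != lambda j.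
Hypothesis H1 : forall i : 'I_(k1 + k2), (i < k1)%N -> lambda i != 1.

Lemma key j : (j < k1)%N -> y j.+1 \notin <<ys y j>>%VS.
Proof.
move=> jk; apply/negP => yin.
pose a := fun i : 'I_j =>
  coord (map_tuple (fun i0 : nat => y i0.+1) (iota_tuple j 0)) i (y j.+1).
have E : y j.+1 = \sum_(i < j) a i *: y i.+1.
  rewrite {1}(coord_span yin); apply: eq_bigr => i _; congr (_ *: _).
  by rewrite /= (nth_map 0%N) ?size_iota // nth_iota.
have sz : j = j by [].
have E2 := congr1 (map_mx phi) E.
rewrite map_mx_sum yC in E2.
pose q : {poly R[i]} := 'X^j - \sum_(i < j) (phi (a i))%:P * 'X^i.
have qE : forall x, q.[x] = x ^+ j - \sum_(i < j) phi (a i) * x ^+ i.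
  move=> x; rewrite /q hornerD hornerN hornerXn horner_sum.
  by congr (_ - _); apply: eq_bigr => i _; rewrite hornerCM hornerXn.
pose e := fun k : 'I_(k1 + k2) =>
  if (k < k1)%N then rho k * (lambda k - 1) * q.[lambda k] else 0.
have He : \sum_k e k *: v k = 0.
  have -> : \sum_k e k *: v k =
     \sum_k (rho k * (lambda k ^+ j * (lambda k - 1)) -
       \sum_(i < j) phi (a i) * (rho k * (lambda k ^+ i * (lambda k - 1))))
       *: (PC *m v k).
    apply: eq_bigr => k _; rewrite /e.
    case: ifP => kk; last by rewrite Hout ?scaler0 ?scale0r // leqNgt kk.
    rewrite Hin // qE; congr (_ *: _).
    rewrite mulrBr mulr_sumr; congr (_ - _); first by ring.
    by apply: eq_bigr => i _; ring.
  rewrite (eq_bigr _ (fun k _ => scalerBl _ _ _)) sumrB E2.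
  rewrite (eq_bigr _ (fun k _ => scaler_suml _ _ _ _)) /= exchange_big /=.
  apply/eqP; rewrite subr_eq0; apply/eqP; apply: eq_bigr => i _.
  rewrite map_mxZ yC scaler_sumr; apply: eq_bigr => k _.
  by rewrite scalerA.
have e0 := indep Hv0 Heig Hd He.
have qroot : forall k : 'I_(k1 + k2), (k < k1)%N -> q.[lambda k] = 0.
  move=> k kk; have := e0 k; rewrite /e kk => /eqP.
  rewrite !mulf_eq0 (negbTE (Hrho k)) subr_eq0 (negbTE (H1 kk)) /= => /eqP //.
have k0 : (0 < k1 + k2)%N by apply: ltn_addr; apply: leq_ltn_trans jk.
pose i0 : 'I_(k1 + k2) := Ordinal k0.
pose rs := [seq lambda (insubd i0 t) | t <- iota 0 j.+1].
have vi : forall t, t \in iota 0 j.+1 -> val (insubd i0 t) = t.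
  move=> t; rewrite mem_iota add0n => tj; rewrite val_insubd ifT //.
  by apply: leq_trans (ltn_addr _ _) (leqnn _); apply: leq_trans tj jk.
have qn0 : size q = j.+1.
  rewrite /q size_polyDl size_polyXn // size_polyN ltnS.
  apply: leq_trans (size_sum _ _ _) _; apply/bigmax_leqP => i _.
  by rewrite mul_polyC (leq_trans (size_scale_leq _ _)) // size_polyXn.
suff : (size rs < size q)%N by rewrite size_map size_iota qn0 ltnn.
apply: max_poly_roots.
- by rewrite -size_poly_eq0 qn0.
- apply/allP => x /mapP [t tin ->]; rewrite rootE qroot //.
  by rewrite vi //; move: tin; rewrite mem_iota add0n => tj; apply: leq_trans tj jk.
- rewrite map_inj_in_uniq ?iota_uniq // => t1 t2 t1in t2in Heq.
  rewrite -(vi _ t1in) -(vi _ t2in); congr val.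
  by apply/eqP/negPn/negP => /Hd; rewrite Heq eqxx.
Qed.
End Main.

Unset Implicit Arguments.
Theorem lemma1 (R : rcfType) (nx nt : nat) (S : 'M[R]_nt) (F : 'M[R]_(nx, nt))
  (theta0 : 'cV[R]_nt) (k1 k2 : nat)
  (v : 'I_(k1 + k2) -> 'cV[R[i]]_nt) (lambda : 'I_(k1 + k2) -> R[i])
  (rho : 'I_(k1 + k2) -> R[i])
  (Hrho : forall i, rho i != 0)
  (Hv0 : forall i, v i != 0)
  (Heig : forall i, map_mx (real_complex R) S *m v i = lambda i *: v i)
  (Htheta : map_mx (real_complex R) theta0 = \sum_(i < k1 + k2) rho i *: v i)
  (Hin : forall i : 'I_(k1 + k2), (i < k1)%N ->
     map_mx (real_complex R) (pinv F *m F) *m v i = v i)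
  (Hout : forall i : 'I_(k1 + k2), (k1 <= i)%N ->
     map_mx (real_complex R) (pinv F *m F) *m v i = 0) :
  let y := ydat S F theta0 in
  (* (i) z_0, ..., z_l pairwise orthogonal *)
  (forall l i j : nat, (i <= l)%N -> (j <= l)%N -> i != j ->
     (zvec y i)^T *m zvec y j = 0) /\
  (* (ii) *)
  ((forall i j, i != j -> lambda i != lambda j) ->
   (forall i : 'I_(k1 + k2), (i < k1)%N -> lambda i != 1) ->
   forall n m : nat, (1 <= n)%N -> (1 <= m)%N -> (m <= minn n k1)%N ->
     free (take m (wseq y n))).
Proof.
move=> y; split.
  move=> l i j _ _ ij; case: (ltngtP i j) => [lt|gt|eq]; first exact: zorth_lt.
    by rewrite -[LHS]trmxK trmx_mul trmxK zorth_lt // trmx0.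
  by rewrite eq eqxx in ij.
move=> Hd H1 n m _ _; rewrite leq_min => /andP[mn mk].
rewrite wseq_take //; apply: (wseq_free (k := k1)) => // j jk.
exact: (key Hrho Hv0 Heig Htheta Hin Hout Hd H1 jk).
Qed.
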